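(* Let $\sigma$ be a finite relational signature, let $\varphi=\forall x_1\exists y_1\cdots\forall x_k\exists y_k\,P(x_1,y_1,\dots,x_k,y_k)$ be a positive Horn sentence with $P$ a conjunction of atomic $\sigma$-formulas containing no equalities, and let $\psi$ be a positive Horn sentence over $\sigma$. Then $\varphi\rightarrow\psi$ is logically valid (true in every $\sigma$-structure) if and only if $\mathcal{T}_\varphi(C_\omega)\models\psi$.
   Context: Positive Horn sentences are first-order sentences built from atoms using only $\exists,\forall,\wedge$. Let $f_1,\dots,f_k$ be new function symbols, $f_i$ of arity $i$, and $\mathrm{Sk}(\varphi)=\forall x_1\cdots\forall x_k\,P(x_1,f_1(x_1),\dots,x_k,f_k(x_1,\dots,x_k))$. Let $C_\omega=\{c_1,c_2,\dots\}$ be countably many new constants and $T_\varphi(C_\omega)$ the set of closed terms built from $C_\omega$ with $f_1,\dots,f_k$. The canonical model $\mathcal{T}_\varphi(C_\omega)$ is the $\sigma$-structure with domain $T_\varphi(C_\omega)$ in which $R(t_1,\dots,t_p)$ holds iff it is obtained from an atom of the matrix of $\mathrm{Sk}(\varphi)$ by substituting terms of $T_\varphi(C_\omega)$ for $x_1,\dots,x_k$. *)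

(* Defs.v *)
From mathcomp Require Import all_boot.
From Stdlib Require List.

Set Implicit Arguments.
Unset Strict Implicit.
Unset Printing Implicit Defensive.

Section FO.

Variable S : finType.
Variable ar : S -> nat.

Inductive phf : Type :=
| PAtom : forall R : S, ('I_(ar R) -> nat) -> phf
| PEq   : nat -> nat -> phf
| PAnd  : phf -> phf -> phf
| PEx   : nat -> phf -> phf
| PAll  : nat -> phf -> phf.

Fixpoint fv (f : phf) : seq nat :=
  match f with
  | PAtom R a => [seq a j | j <- enum 'I_(ar R)]
  | PEq x y => [:: x; y]
  | PAnd f g => fv f ++ fv g
  | PEx x f => [seq y <- fv f | y != x]
  | PAll x f => [seq y <- fv f | y != x]
  end.

Definition sentence (f : phf) : Prop := fv f = [::].

(* sigma-structures (with nonempty domain, as usual in first-order logic). *)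
Record structure : Type := Structure {
  dom :> Type;
  point : dom;
  rel : forall R : S, ('I_(ar R) -> dom) -> Prop
}.

Definition upd (D : Type) (e : nat -> D) (x : nat) (d : D) : nat -> D :=
  fun y => if y == x then d else e y.

Fixpoint sat (M : structure) (e : nat -> M) (f : phf) : Prop :=
  match f with
  | PAtom R a => rel (R:=R) (fun j => e (a j))
  | PEq x y => e x = e y
  | PAnd f g => sat e f /\ sat e g
  | PEx x f => exists d : M, sat (upd e x d) f
  | PAll x f => forall d : M, sat (upd e x d) f
  end.

Definition models (M : structure) (f : phf) : Prop := forall e : nat -> M, sat e f.

Definition valid_impl (phi psi : phf) : Prop :=
  forall M : structure, models M phi -> models M psi.

(* Variables of the matrix: inl i = x_{i+1}, inr i = y_{i+1}  (i : 'I_k). *)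
Definition pvar (k : nat) := ('I_k + 'I_k)%type.

Definition patom (k : nat) := {R : S & 'I_(ar R) -> pvar k}.

(* Encoding of x_{i+1} as variable 2i and y_{i+1} as 2i+1. *)
Definition pvar_code k (v : pvar k) : nat :=
  match v with inl i => (nat_of_ord i).*2 | inr i => (nat_of_ord i).*2.+1 end.

Definition patom_formula k (a : patom k) : phf :=
  PAtom (fun j => pvar_code (projT2 a j)).

Definition matrix k (P : seq (patom k)) : phf :=
  match P with
  | [::] => PEq 0 0 (* unused: P is assumed nonempty *)
  | a :: l => foldr (fun b f => PAnd f (patom_formula b)) (patom_formula a) l
  end.

Definition phi_formula k (P : seq (patom k)) : phf :=
  foldr (fun i f => PAll i.*2 (PEx i.*2.+1 f)) (matrix P) (iota 0 k).

(* Closed terms over constants C_omega = {c_0, c_1, ...} and Skolem functions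
   f_1, ..., f_k; App i args is f_{i+1}(args) with arity i+1. *)
Inductive term (k : nat) : Type :=
| Const : nat -> term k
| App : forall i : 'I_k, ('I_(i.+1) -> term k) -> term k.

(* Value of a matrix variable under the Skolemization, after substituting
   terms s i for x_{i+1}: x_{i+1} |-> s i, y_{i+1} |-> f_{i+1}(s 0, ..., s i). *)
Definition skval k (s : 'I_k -> term k) (v : pvar k) : term k :=
  match v with
  | inl i => s i
  | inr i => App (fun j : 'I_(i.+1) => s (widen_ord (ltn_ord i) j))
  end.

(* R(t_1..t_p) holds iff it is obtained from an atom of the matrix of Sk(phi)
   by substituting closed terms for x_1, ..., x_k. *)
Definition canon_rel k (P : seq (patom k)) (R : S) (t : 'I_(ar R) -> term k) : Prop :=
  exists (a : 'I_(ar R) -> pvar k) (s : 'I_k -> term k),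
    List.In (existT _ R a) P /\ t = (fun j => skval s (a j)).

Definition canonical_model k (P : seq (patom k)) : structure :=
  @Structure (term k) (Const k 0) (@canon_rel k P).

End FO.

(* Main.v *)
Require Import Defs.
From mathcomp Require Import all_boot.
From Stdlib Require Import ClassicalEpsilon FunctionalExtensionality.
From Stdlib Require List.

Set Implicit Arguments.
Unset Strict Implicit.
Unset Printing Implicit Defensive.

Section Proof.
Variable S : finType.
Variable ar : S -> nat.
Variable k : nat.
Variable P : seq (patom ar k).

Definition quant (i : nat) (f : phf ar) : phf ar := PAll i.*2 (PEx i.*2.+1 f).
Definition Q (i : nat) : phf ar := foldr quant (matrix P) (iota i (k - i)).

Lemma Q0 : Q 0 = phi_formula P.
Proof. by rewrite /Q subn0. Qed.

Lemma QS i : i < k -> Q i = quant i (Q i.+1).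
Proof.
move=> lt; rewrite /Q.
have -> : k - i = (k - i.+1).+1 by rewrite subnSK.
by [].
Qed.

Lemma Qk : Q k = matrix P.
Proof. by rewrite /Q subnn. Qed.

Lemma foldr_sat (M : structure ar) (e : nat -> M) (a : patom ar k) l :
  sat e (foldr (fun b f => PAnd f (patom_formula b)) (patom_formula a) l) <->
  forall b, List.In b (a :: l) -> sat e (patom_formula b).
Proof.
elim: l => [|b l IH] /=.
  split; first by move=> H b [<-|[]].
  by move=> H; apply: H; left.
rewrite IH; split.
  move=> [H1 H2] c [<-|[<-|Hc]]; [by apply: H1; left| by []| by apply: H1; right].
move=> H; split; last by apply: H; right; left.
by move=> c [<-|Hc]; apply: H; [left|right;right].
Qed.

Lemma matrix_sat (M : structure ar) (e : nat -> M) :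
  P <> [::] ->
  sat e (matrix P) <-> forall b, List.In b P -> sat e (patom_formula b).
Proof. by case: P => [//|a l] _; rewrite /matrix foldr_sat. Qed.

Definition Inv (i : nat) (e : nat -> term k) : Prop :=
  forall j : 'I_k, j < i ->
    e (nat_of_ord j).*2.+1 = App (fun j' : 'I_j.+1 => e (nat_of_ord (widen_ord (ltn_ord j) j')).*2).

Lemma double_neq_odd a b : (a.*2 == b.*2.+1) = false.
Proof.
apply/negbTE/eqP => H.
have := congr1 odd H; by rewrite odd_double /= odd_double.
Qed.

Lemma canon_Q (Pne : P <> [::]) : forall n i, i + n = k -> forall e, Inv i e -> sat (M:=canonical_model P) e (Q i).
Proof.
elim=> [|n IH] i Hi e He.
  rewrite addn0 in Hi; subst i; rewrite Qk; apply/matrix_sat => // [[R a]] Hin.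
  rewrite /patom_formula /=.
  exists a, (fun i => e (nat_of_ord i).*2); split => //.
  apply: functional_extensionality => j.
  case: (a j) => [i|i] //=.
  by rewrite He.
have lt : i < k by rewrite -Hi addnS ltnS leq_addr.
rewrite QS // /quant /= => d.
set e1 := upd e i.*2 d.
exists (@App k (Ordinal lt) (fun j' : 'I_i.+1 => e1 (nat_of_ord (widen_ord lt j')).*2)).
apply: IH; first by rewrite addSnnS.
move=> j Hj; rewrite /e1 /upd.
have argE : forall j' : 'I_j.+1, (nat_of_ord (widen_ord (ltn_ord j) j')).*2 == i.*2.+1 = false
  by move=> j'; rewrite double_neq_odd.
under [X in _ = App X]functional_extensionality => j' do rewrite argE.
rewrite eqSS (inj_eq double_inj).
case: (ltngtP j i) => [ji|ji|ji].
2: by move: Hj; rewrite ltnS leqNgt ji.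
2: have -> : j = Ordinal lt by apply: val_inj.
2: by congr App; apply: functional_extensionality.
have jne : (j.*2.+1 == i.*2) = false by rewrite eq_sym double_neq_odd.
rewrite jne He //.
congr App; apply: functional_extensionality => j' /=.
rewrite (inj_eq double_inj) (_ : (_ == i) = false) //.
apply/negbTE; rewrite neq_ltn; apply/orP; left.
by apply: leq_ltn_trans ji; rewrite -ltnS.
Qed.

Lemma canon_phi (Pne : P <> [::]) : models (canonical_model P) (phi_formula P).
Proof.
move=> e; rewrite -Q0; apply: (canon_Q Pne (n:=k)) => //.
Qed.


Section Back.
Variable M : structure ar.
Hypothesis HM : models M (phi_formula P).

Definition ext n (g : 'I_n -> M) (j : nat) : M :=
  match insub j with Some o => g o | None => point M end.

Lemma extE n (g : 'I_n -> M) j (H : j < n) : ext g j = g (Ordinal H).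
Proof.
rewrite /ext insubT; congr g; exact: val_inj.
Qed.

Definition inhM : inhabited M := inhabits (point M).

Fixpoint A (x : nat -> M) (i : nat) : nat -> M :=
  match i with
  | 0 => fun _ => point M
  | i'.+1 =>
    let a := upd (A x i') i'.*2 (x i') in
    upd a i'.*2.+1 (epsilon inhM (fun y => sat (upd a i'.*2.+1 y) (Q i'.+1)))
  end.

Lemma A_dep x x' i : (forall j, j < i -> x j = x' j) -> A x i = A x' i.
Proof.
elim: i => [//|i IH] H /=.
by rewrite IH ?H // => j Hj; apply: H; apply: ltnW.
Qed.

Lemma A_step x i j : j <> i -> A x i.+1 j.*2 = A x i j.*2 /\ A x i.+1 j.*2.+1 = A x i j.*2.+1.
Proof.
move=> ne /=; rewrite /upd.
have e1 : (j.*2.+1 == i.*2) = false by rewrite eq_sym double_neq_odd.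
rewrite (double_neq_odd j i) eqSS (inj_eq double_inj) e1.
by case: eqP.
Qed.

Lemma A_val x i j : j < i -> A x i j.*2 = x j /\ A x i j.*2.+1 = A x j.+1 j.*2.+1.
Proof.
elim: i => [//|i IH] Hj.
case: (eqVneq j i) => [->|ne].
  split; last by [].
  by rewrite /= /upd (double_neq_odd i i) eqxx.
have ji : j < i by move: Hj; rewrite ltnS leq_eqVlt => /orP[/eqP|//]; move/eqP: ne.
have [-> ->] := A_step x (elimN eqP ne).
exact: IH.
Qed.

Lemma A_sat x i : i <= k -> sat (A x i) (Q i).
Proof.
elim: i => [|i IH] Hi; first by rewrite Q0; apply: HM.
have := IH (ltnW Hi); rewrite QS // /quant /= => /(_ (x i)) Hex.
exact: (epsilon_spec inhM _ Hex).
Qed.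

Definition F (i : 'I_k) (g : 'I_i.+1 -> M) : M := A (ext g) i.+1 (nat_of_ord i).*2.+1.

Fixpoint hc (c : nat -> M) (t : term k) : M :=
  match t with
  | Const n => c n
  | App i f => F (fun j => hc c (f j))
  end.

Lemma hom (Pne : P <> [::]) c R (t : 'I_(ar R) -> term k) :
  canon_rel P t -> Defs.rel (s:=M) (fun j => hc c (t j)).
Proof.
move=> [a [s [Hin ->]]].
set x := ext (fun i => hc c (s i)).
have := A_sat x (leqnn k); rewrite Qk => /(matrix_sat _ Pne) /(_ _ Hin) /=.
congr Defs.rel; apply: functional_extensionality => j.
case: (a j) => i /=.
  by rewrite (proj1 (A_val x (ltn_ord i))) /x extE; congr (hc c (s _)); apply: val_inj.
rewrite (proj2 (A_val x (ltn_ord i))) /F.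
rewrite (@A_dep x (ext (fun j : 'I_i.+1 => hc c (s (widen_ord (ltn_ord i) j)))) i.+1) // => j' Hj'.
rewrite /x (extE _ Hj') (extE _ (leq_trans Hj' (ltn_ord i))).
congr (hc c (s _)); exact: val_inj.
Qed.

Inductive below (m : nat) : term k -> Prop :=
| BConst n : n < m -> below m (Const k n)
| BApp i f : (forall j, below m (f j)) -> below m (@App k i f).

Lemma below_mono m m' t : m <= m' -> below m t -> below m' t.
Proof.
move=> le; elim=> [n Hn|i f _ IH]; constructor => //.
exact: leq_trans le.
Qed.

Lemma fin_bound n (B : 'I_n -> nat -> Prop) :
  (forall j m m', m <= m' -> B j m -> B j m') ->
  (forall j, exists m, B j m) -> exists m, forall j, B j m.
Proof.
elim: n B => [|n IH] B Hmono Hex.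
  by exists 0 => -[].
have [m1 H1] := IH (fun j => B (lift ord0 j)) (fun j => Hmono _) (fun j => Hex _).
have [m0 H0] := Hex ord0.
exists (maxn m0 m1) => j.
case: (unliftP ord0 j) => [j' ->|->].
  by apply: Hmono (H1 j'); rewrite leq_maxr.
by apply: Hmono H0; rewrite leq_maxl.
Qed.

Lemma below_ex t : exists m, below m t.
Proof.
elim: t => [n|i f IH].
  by exists n.+1; constructor.
have [m Hm] := fin_bound (fun j m m' le => @below_mono m m' (f j) le) IH.
by exists m; constructor.
Qed.

Lemma below_seq (e : nat -> term k) (l : seq nat) :
  exists m, forall y, y \in l -> below m (e y).
Proof.
elim: l => [|y l [m Hm]]; first by exists 0.
have [m' Hm'] := below_ex (e y).
exists (maxn m m') => z; rewrite inE => /orP[/eqP->|Hz].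
  by apply: below_mono Hm'; rewrite leq_maxr.
by apply: below_mono (Hm _ Hz); rewrite leq_maxl.
Qed.

Lemma hc_fresh c m d t : below m t -> hc (fun n => if n == m then d else c n) t = hc c t.
Proof.
elim=> [n Hn|i f _ IH] /=.
  by rewrite (_ : (n == m) = false) //; apply/negbTE; rewrite neq_ltn Hn.
by congr F; apply: functional_extensionality => j.
Qed.

Lemma transfer (Pne : P <> [::]) (f : phf ar) : forall c (eT : nat -> term k) (eM : nat -> M),
  (forall y, y \in fv f -> hc c (eT y) = eM y) ->
  sat (M:=canonical_model P) eT f -> sat eM f.
Proof.
elim: f => [R a|x y|f IHf g IHg|x f IH|x f IH] c eT eM Hag /=.
- move=> /(hom Pne c).
  congr Defs.rel; apply: functional_extensionality => j.
  apply: Hag => /=; apply: map_f; exact: mem_enum.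
- move=> E; rewrite -!Hag ?E //= !inE eqxx ?orbT //.
- move=> [H1 H2]; split.
    by apply: (IHf c eT) => // z Hz; apply: Hag; rewrite /= mem_cat Hz.
  by apply: (IHg c eT) => // z Hz; apply: Hag; rewrite /= mem_cat Hz orbT.
- move=> [t Ht]; exists (hc c t).
  apply: (IH c (upd eT x t)) => // z Hz; rewrite /upd.
  case: eqP => [//|ne]; apply: Hag => /=.
  by rewrite mem_filter Hz andbT; apply/eqP.
- move=> Ht d.
  have [m Hm] := below_seq eT (fv (PAll x f)).
  apply: (IH (fun n => if n == m then d else c n) (upd eT x (Const k m))); last exact: Ht.
  move=> z Hz; rewrite /upd.
  case: eqP => [_|ne] /=; first by rewrite eqxx.
  have Hz' : z \in fv (PAll x f) by rewrite /= mem_filter Hz andbT; apply/eqP.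
  rewrite hc_fresh; [exact: Hag | exact: Hm].
Qed.

End Back.

End Proof.

Theorem mainTheorem10 (S : finType) (ar : S -> nat)
  (k : nat) (P : seq (patom ar k)) (psi : phf ar) :
  P <> [::] ->
  sentence psi ->
  valid_impl (phi_formula P) psi <-> models (canonical_model P) psi.
Proof.
move=> Pne Hsen; split.
  by move=> H; apply: H; apply: canon_phi.
move=> HT M HM e.
apply: (transfer HM Pne (c := fun _ => point M) (eT := fun _ => Const k 0)); last exact: HT.
by move=> y; rewrite Hsen.
Qed.
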